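(* Let $M$ be an $n\times n$ ($n\geq 2$) primitive Boolean matrix with Boolean rank $b(M)=b$. Then $$k(M)\leq \left\lceil\frac{(b-1)^2+1}{2}\right\rceil +1.$$
   Context: Boolean matrices are $(0,1)$-matrices with Boolean arithmetic ($1+1=1$). A square Boolean matrix $M$ is primitive if some power $M^r$ has all entries equal to $1$. The scrambling index $k(M)$ of a primitive matrix $M$ is the smallest positive integer $k$ such that any two rows of $M^k$ have a $1$ in a common position; equivalently, the smallest $k$ with $M^k(M^t)^k=J$ (the all-ones matrix). The Boolean rank $b(M)$ of an $m\times n$ nonzero Boolean matrix $M$ is the smallest positive integer $b$ such that $M=AB$ for some $m\times b$ Boolean matrix $A$ and $b\times n$ Boolean matrix $B$ (Boolean product). *)

(* Defs.v *)
From mathcomp Require Import all_boot.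
Set Implicit Arguments. Unset Strict Implicit. Unset Printing Implicit Defensive.

(* Boolean matrices: (0,1)-matrices represented as 'M[bool]_(m,n) is awkward
   since bool has no ring structure with 1+1=1; we use finite functions. *)
Definition bmat (m n : nat) := {ffun 'I_m -> 'I_n -> bool}.

Definition bmul (m p n : nat) (A : bmat m p) (B : bmat p n) : bmat m n :=
  [ffun i => fun j => [exists k : 'I_p, A i k && B k j]].

Definition bid (n : nat) : bmat n n := [ffun i => fun j => i == j].

Definition bpow (n : nat) (M : bmat n n) (k : nat) : bmat n n :=
  iter k (fun X => bmul X M) (bid n).

Definition all_ones (m n : nat) (A : bmat m n) : Prop := forall i j, A i j = true.

Definition primitive (n : nat) (M : bmat n n) : Prop :=
  exists r, all_ones (bpow M r).

Definition nonzero (m n : nat) (A : bmat m n) : Prop := exists i j, A i j = true.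

Definition rows_scrambled (n : nat) (A : bmat n n) : Prop :=
  forall i i' : 'I_n, exists j : 'I_n, A i j && A i' j.

Definition is_scrambling_index (n : nat) (M : bmat n n) (k : nat) : Prop :=
  0 < k /\ rows_scrambled (bpow M k) /\
  forall k', 0 < k' -> k' < k -> ~ rows_scrambled (bpow M k').

Definition bfactors (m n b : nat) (M : bmat m n) : Prop :=
  exists (A : bmat m b) (B : bmat b n), M = bmul A B.

Definition is_boolean_rank (m n : nat) (M : bmat m n) (b : nat) : Prop :=
  0 < b /\ bfactors b M /\ forall b', 0 < b' -> b' < b -> ~ bfactors b' M.

(* Main.v *)
Require Import Defs.
From mathcomp Require Import all_boot zify.
Set Implicit Arguments. Unset Strict Implicit. Unset Printing Implicit Defensive.

Lemma bmulE m p n (A : bmat m p) (B : bmat p n) i j :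
  bmul A B i j = [exists k, A i k && B k j].
Proof. by rewrite /bmul ffunE. Qed.

Lemma bpow0 m (N : bmat m m) x y : bpow N 0 x y = (x == y).
Proof. by rewrite /bpow /= /bid ffunE. Qed.

Lemma bpowS m (N : bmat m m) t x y :
  bpow N t.+1 x y = [exists k, bpow N t x k && N k y].
Proof. by rewrite /bpow iterS -/(bpow N t) bmulE. Qed.

Lemma bpow_add m (N : bmat m m) a b x y :
  bpow N (a + b) x y = [exists w, bpow N a x w && bpow N b w y].
Proof.
elim: b y => [|b IH] y.
  rewrite addn0; apply/idP/existsP => [H|[w /andP[H1]]].
    by exists y; rewrite H bpow0 eqxx.
  by rewrite bpow0 => /eqP <-.
rewrite addnS bpowS; apply/existsP/existsP => [[k /andP[]]|[w /andP[H1]]].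
  rewrite IH => /existsP[w /andP[H1 H2]] H3; exists w; rewrite H1 /=.
  by rewrite bpowS; apply/existsP; exists k; rewrite H2.
rewrite bpowS => /existsP[k /andP[H2 H3]]; exists k; rewrite H3 andbT IH.
by apply/existsP; exists w; rewrite H1.
Qed.

Lemma walk_add m (N : bmat m m) a b x w y :
  bpow N a x w -> bpow N b w y -> bpow N (a + b) x y.
Proof. by move=> H1 H2; rewrite bpow_add; apply/existsP; exists w; rewrite H1. Qed.

Lemma walk_split m (N : bmat m m) a b x y :
  bpow N (a + b) x y -> exists2 w, bpow N a x w & bpow N b w y.
Proof. by rewrite bpow_add => /existsP[w /andP[]]; exists w. Qed.

Lemma bpow1 m (N : bmat m m) x y : bpow N 1 x y = N x y.
Proof.
rewrite bpowS; apply/existsP/idP => [[k /andP[]]|H].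
  by rewrite bpow0 => /eqP->.
by exists x; rewrite bpow0 eqxx.
Qed.
Lemma growth (T : finType) (F : nat -> {set T}) K :
  (forall k, F k \subset F k.+1) ->
  (forall k, F k.+1 = F k -> F k.+2 = F k.+1) ->
  F K = setT -> forall k, minn #|T| (#|F 0| + k) <= #|F k|.
Proof.
move=> Hsub Hst HK.
have stuck k : F k.+1 = F k -> forall j, F (k + j) = F k.
  move=> Hk.
  have H j : F (k + j).+1 = F (k + j).
    elim: j => [|j IH]; first by rewrite addn0.
    by rewrite addnS Hst.
  elim=> [|j IH]; first by rewrite addn0.
  by rewrite addnS H.
have mono k j : F k \subset F (k + j).
  elim: j => [|j IH]; first by rewrite addn0.
  by rewrite addnS; apply: subset_trans IH (Hsub _).
elim=> [|k IH]; first by rewrite addn0 geq_minr.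
have [Hk|Hk] := eqVneq (F k) setT.
  have : F k.+1 = setT by apply/eqP; rewrite eqEsubset subsetT -Hk Hsub.
  by move=> ->; rewrite cardsT geq_minl.
have Hne : F k.+1 != F k.
  apply/eqP=> E; move/eqP: Hk; apply.
  have [Kk|kK] := leqP k K.
    by have := stuck k E (K - k); rewrite subnKC // HK.
  apply/eqP; rewrite eqEsubset subsetT -HK.
  by have := mono K (k - K); rewrite subnKC // ltnW.
have Hp : F k \proper F k.+1 by rewrite properEneq eq_sym Hne Hsub.
have := proper_card Hp; lia.
Qed.

Lemma cards_meet (T : finType) (A B : {set T}) :
  #|T| < #|A| + #|B| -> exists x, (x \in A) && (x \in B).
Proof.
move=> H; case: (set_0Vmem (A :&: B)) => [E|[x]].
  have := cardsUI A B; rewrite E cards0 addn0 => E2.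
  have := subset_leq_card (subsetT (A :|: B)); rewrite cardsT; lia.
by rewrite inE => Hx; exists x.
Qed.

Definition primr m (N : bmat m m) r := 0 < r /\ forall x y, bpow N r x y.

Lemma out_nb m (N : bmat m m) r : primr N r -> forall x, exists y, N x y.
Proof.
case=> Hr Hf x; have := Hf x x; rewrite -(subnKC Hr) => /walk_split[y].
by rewrite bpow1 => H _; exists y.
Qed.

Lemma in_nb m (N : bmat m m) r : primr N r -> forall y, exists x, N x y.
Proof.
case=> Hr Hf y; have := Hf y y; rewrite -(subnK Hr) => /walk_split[x _].
by rewrite bpow1 => H; exists x.
Qed.

Lemma out_ex m (N : bmat m m) r : primr N r -> forall t x, exists y, bpow N t x y.
Proof.
move=> Hp; elim=> [|t IH] x; first by exists x; rewrite bpow0.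
have [y Hy] := IH x; have [z Hz] := out_nb Hp y.
by exists z; rewrite -addn1; apply: walk_add Hy _; rewrite bpow1.
Qed.

Lemma full_ge m (N : bmat m m) r : primr N r -> forall t, r <= t -> forall x y, bpow N t x y.
Proof.
move=> Hp t Ht x y; have [w Hw] := out_ex Hp (t - r) x.
by rewrite -(subnK Ht); apply: walk_add Hw _; case: Hp.
Qed.

Lemma walk_seq m (N : bmat m m) t x y : bpow N t x y ->
  exists f : nat -> 'I_m, [/\ f 0 = x, f t = y & forall i, i < t -> N (f i) (f i.+1)].
Proof.
elim: t y => [|t IH] y.
  by rewrite bpow0 => /eqP <-; exists (fun _ => x); split.
rewrite bpowS => /existsP[k /andP[/IH[f [f0 ft fN]] Hk]].
exists (fun i => if i == t.+1 then y else f i); split => //.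
  by rewrite eqxx.
move=> i Hi; rewrite (ltn_eqF Hi) eqSS; case: eqP => [->|/eqP Hne].
  by rewrite ft.
by apply: fN; rewrite ltn_neqAle Hne -ltnS Hi.
Qed.

Lemma seq_walk m (N : bmat m m) (f : nat -> 'I_m) i j :
  (forall l, i <= l -> l < j -> N (f l) (f l.+1)) -> i <= j -> bpow N (j - i) (f i) (f j).
Proof.
elim: j => [|j IH] Hf Hij.
  by rewrite leqn0 in Hij; rewrite (eqP Hij) bpow0.
case: (leqP i j) => Hij'.
  rewrite subSn // -addn1; apply: walk_add (IH _ Hij') _; last by rewrite bpow1 Hf.
  by move=> l H1 H2; apply: Hf => //; rewrite ltnW.
have -> : i = j.+1 by apply/eqP; rewrite eqn_leq Hij.
by rewrite subnn bpow0.
Qed.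

Definition is_cyc m (N : bmat m m) s (c : nat -> 'I_m) :=
  [/\ 0 < s, (forall t y, 0 < t -> t < s -> ~~ bpow N t y y),
      (forall i, N (c i) (c i.+1)) & (forall i, c (i + s) = c i)].

Lemma girth_cycle m (N : bmat m m) r : primr N r -> forall x : 'I_m,
  exists s c, @is_cyc m N s c.
Proof.
move=> Hp x0.
have Hex : exists s, (0 < s) && [exists x, bpow N s x x].
  exists r; case: Hp => Hr Hf; rewrite Hr /=; apply/existsP; exists x0; exact: Hf.
case: (ex_minnP Hex) => s /andP[s0 /existsP[x Hx]] Hmin.
have [f [f0 fs fN]] := walk_seq Hx.
exists s, (fun i => f (i %% s)); split => //.
- move=> t y t0 ts; apply/negP=> H.
  have : [exists x, bpow N t x x] by apply/existsP; exists y.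
  by move/(conj t0)/andP/Hmin; rewrite leqNgt ts.
- move=> i; have E0 : i.+1 %% s = (i %% s).+1 %% s by rewrite -addn1 -modnDml addn1.
  rewrite E0; case: (ltnP (i %% s).+1 s) => H.
    by rewrite (modn_small H); apply: fN; rewrite ltn_pmod.
  have E : (i %% s).+1 = s by apply/eqP; rewrite eqn_leq H ltn_pmod.
  rewrite E modnn f0 -fs -{2}E; apply: fN.
  by rewrite ltn_pmod.
- by move=> i; rewrite modnDr.
Qed.

Lemma cyc_walk m (N : bmat m m) s c : @is_cyc m N s c ->
  forall i k, bpow N k (c i) (c (i + k)).
Proof.
case=> _ _ Hc _ i; elim=> [|k IH]; first by rewrite addn0 bpow0.
by rewrite addnS -addn1; apply: walk_add IH _; rewrite bpow1.
Qed.

Lemma cyc_mod m (N : bmat m m) s c : @is_cyc m N s c -> forall i, c i = c (i %% s).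
Proof.
case=> _ _ _ Hper i; rewrite {1}(divn_eq i s).
elim: (i %/ s) => [|q IH]; first by rewrite mul0n add0n.
by rewrite mulSn -addnA addnC Hper.
Qed.

Lemma cyc_inj m (N : bmat m m) s c : @is_cyc m N s c ->
  forall i j, i < s -> j < s -> c i = c j -> i = j.
Proof.
move=> Hc i j; wlog ij : i j / i <= j => [W|].
  move=> Hi Hj E.
  by case: (leqP i j) => H; [apply: W | symmetry; apply: W => //; rewrite ltnW].
move=> Hi Hj E.
case: Hc => s0 Hmin Harc Hper; have := cyc_walk (And4 s0 Hmin Harc Hper) i (j - i).
rewrite subnKC // -E => H; apply/eqP; rewrite eqn_leq ij /= leqNgt; apply/negP=> ij'.
have Hlt : j - i < s by apply: leq_ltn_trans (leq_subr _ _) Hj.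
by have := Hmin (j - i) (c i); rewrite H subn_gt0 ij' Hlt => /(_ isT isT).
Qed.

Lemma cyc_Z m (N : bmat m m) s c : @is_cyc m N s c -> forall i, bpow N s (c i) (c i).
Proof. by move=> Hc i; have := cyc_walk Hc i s; case: Hc => _ _ _ ->. Qed.

Lemma cyc_back m (N : bmat m m) s c : @is_cyc m N s c ->
  forall i j, exists l, [/\ bpow N l (c j) (c i), l < s & (i %% s + s - l) %% s = j %% s].
Proof.
move=> Hc i j; case: (Hc) => s0 Hmin _ Hper.
set i' := i %% s; set j' := j %% s.
have Hi' : i' < s by rewrite ltn_pmod.
have Hj' : j' < s by rewrite ltn_pmod.
case: (leqP j' i') => H.
  exists (i' - j'); split.
  + by rewrite (cyc_mod Hc j) (cyc_mod Hc i) -/i' -/j'; have := cyc_walk Hc j' (i' - j'); rewrite subnKC.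
  + by apply: leq_ltn_trans (leq_subr _ _) Hi'.
  + have -> : i' + s - (i' - j') = j' + s by lia.
    by rewrite modnDr modn_small.
exists (i' + s - j'); split.
+ rewrite (cyc_mod Hc j) (cyc_mod Hc i) -/i' -/j'; have := cyc_walk Hc j' (i' + s - j').
  by rewrite subnKC ?Hper // ltnW // ltn_addl.
+ lia.
+ have -> : i' + s - (i' + s - j') = j' by lia.
  by rewrite modn_small.
Qed.

Lemma cyc_short m (N : bmat m m) s c : @is_cyc m N s c ->
  forall t i j, 0 < t -> bpow N t (c i) (c j) ->
  exists k, [/\ 0 < k, k <= t & j %% s = (i + k) %% s].
Proof.
move=> Hc t i j t0 Hij; case: (Hc) => s0 Hmin _ Hper.
have [l [Hl Hls Hli]] := cyc_back Hc i j.
have Hcl : bpow N (t + l) (c i) (c i) by apply: walk_add Hij Hl.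
have Hl1 : s <= t + l.
  rewrite leqNgt; apply/negP=> H; have := Hmin (t + l) (c i).
  by rewrite Hcl addn_gt0 t0 => /(_ isT H).
exists (s - l); split; first by rewrite subn_gt0.
  by rewrite leq_subLR addnC.
by rewrite -Hli -modnDml addnBA // ltnW.
Qed.

Lemma cyc_arc m (N : bmat m m) s c : @is_cyc m N s c ->
  forall i j, N (c i) (c j) -> j %% s = i.+1 %% s.
Proof.
move=> Hc i j Hij; have := @cyc_short _ _ _ _ Hc 1 i j isT; rewrite bpow1 => /(_ Hij).
case=> k [k0 k1 ->]; have -> : k = 1 by apply/eqP; rewrite eqn_leq k1.
by rewrite addn1.
Qed.

Definition Zs m (N : bmat m m) s := [set y : 'I_m | bpow N s y y].

Lemma card_Z m (N : bmat m m) s c : @is_cyc m N s c -> s <= #|Zs N s|.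
Proof.
move=> Hc.
have Hinj : injective (fun i : 'I_s => c i).
  by move=> i j /(cyc_inj Hc (ltn_ord i) (ltn_ord j)) /val_inj.
rewrite -{1}(card_ord s) -(card_imset _ Hinj); apply: subset_leq_card.
by apply/subsetP=> y /imsetP[i _ ->]; rewrite inE cyc_Z.
Qed.

Lemma Z_succ m (N : bmat m m) s y : 0 < s -> bpow N s y y ->
  exists y', N y y' /\ bpow N s y' y'.
Proof.
move=> s0 Hy; move: (Hy); rewrite -{1}(subnKC s0) => /walk_split[y' H1 H2].
exists y'; split; first by rewrite -bpow1.
by rewrite -(subnK s0); apply: walk_add H2 H1.
Qed.

Lemma Y_bound m (N : bmat m m) r s c : primr N r -> @is_cyc m N s c ->
  forall t, minn m (s + t) <=
     #|[set u : 'I_m | [exists w in Zs N s, bpow N t u w]]|.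
Proof.
move=> Hp Hc t.
set F := fun t => [set u : 'I_m | [exists w in Zs N s, bpow N t u w]].
have s0 : 0 < s by case: Hc.
have FS k : F k.+1 = [set u | [exists v, N u v && (v \in F k)]].
  apply/setP=> u; rewrite !inE; apply/existsP/existsP.
    case=> w /andP[Hw]; rewrite -add1n => /walk_split[v H1 H2].
    by exists v; rewrite -bpow1 H1 inE; apply/existsP; exists w; rewrite Hw.
  case=> v /andP[H1]; rewrite inE => /existsP[w /andP[Hw H2]].
  by exists w; rewrite Hw -add1n; apply: walk_add H2; rewrite bpow1.
have F0 : s <= #|F 0|.
  apply: leq_trans (card_Z Hc) _; apply: subset_leq_card; apply/subsetP=> y Hy.
  by rewrite /F inE; apply/existsP; exists y; rewrite Hy bpow0 eqxx.
rewrite -/(F t).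
have HH : minn m (#|F 0| + t) <= #|F t|; last first.
  by apply: leq_trans HH; rewrite leq_min geq_minl /=; apply: leq_trans (geq_minr _ _) _; rewrite leq_add2r.
have := @growth _ F r; rewrite card_ord; apply.
- move=> k; apply/subsetP=> u; rewrite !inE => /existsP[w /andP[Hw H]].
  move: Hw; rewrite inE => Hw; have [w' [H1 H2]] := Z_succ s0 Hw.
  apply/existsP; exists w'; rewrite inE H2 -addn1; apply: walk_add H _.
  by rewrite bpow1.
- by move=> k E; rewrite FS E -FS.
- apply/setP=> u; rewrite !inE; apply/existsP; exists (c 0).
  by rewrite inE cyc_Z //; case: Hp => _ ->.
Qed.

Lemma reach_bound m (N : bmat m m) r s u y d T : primr N r -> 0 < s ->
  bpow N d u y -> bpow N s y y -> d <= T ->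
  minn m (1 + (T - d) %/ s) <= #|[set w : 'I_m | bpow N T u w]|.
Proof.
move=> Hp s0 Hd Hy dT.
set r0 := (T - d) %% s; set k0 := (T - d) %/ s.
set F := fun k => [set w : 'I_m | bpow N (k * s + r0) y w].
have FS k : F k.+1 = [set w | [exists v, (v \in F k) && bpow N s v w]].
  apply/setP=> w; rewrite !inE mulSn -addnA addnC; apply/idP/existsP.
    by move/walk_split=> [v H1 H2]; exists v; rewrite inE H1.
  by case=> v /andP[]; rewrite inE; apply: walk_add.
have F0 : 1 <= #|F 0|.
  have [w Hw] := out_ex Hp (0 * s + r0) y.
  by rewrite card_gt0; apply/set0Pn; exists w; rewrite inE.
have HF : minn m (#|F 0| + k0) <= #|F k0|.
  have := @growth _ F r; rewrite card_ord; apply.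
  - move=> k; apply/subsetP=> w; rewrite !inE => H.
    by rewrite mulSn -addnA; apply: walk_add Hy H.
  - by move=> k E; rewrite FS E -FS.
  - apply/setP=> w; rewrite !inE; apply: full_ge Hp _ _ _ _.
    by apply: leq_trans (leq_addr _ _); rewrite leq_pmulr.
apply: leq_trans (_ : #|F k0| <= _).
  apply: leq_trans HF; rewrite leq_min geq_minl /=.
  by apply: leq_trans (geq_minr _ _) _; rewrite leq_add2r.
apply: subset_leq_card; apply/subsetP=> w; rewrite !inE => H.
rewrite -(subnKC dT) (divn_eq (T - d) s); apply: walk_add Hd H.
Qed.

Lemma no_potential m (N : bmat m m) r (x : 'I_m) q (phi : 'I_m -> nat) :
  primr N r -> 1 < q -> (forall a b, N a b -> phi b = (phi a).+1 %[mod q]) -> False.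
Proof.
move=> Hp q1 Hphi.
have W t a b : bpow N t a b -> phi b = phi a + t %[mod q].
  elim: t b => [|t IH] b; first by rewrite bpow0 addn0 => /eqP->.
  rewrite bpowS => /existsP[k /andP[/IH H1 /Hphi H2]].
  by rewrite H2 -addn1 -modnDml H1 modnDml addn1 addnS.
have Hle : r <= r * q + 1 by apply: leq_trans (leq_addr _ _); rewrite leq_pmulr // ltnW.
have H := W (r * q + 1) x x (full_ge Hp Hle x x).
rewrite (addnC (r * q) 1) addnA -modnDmr modnMl addn0 in H.
move/eqP: H; rewrite -{1}[phi x]addn0 eqn_modDl mod0n (modn_small q1) //.
Qed.

Definition idx m (c : nat -> 'I_m) s (w : 'I_m) : nat :=
  if [pick k : 'I_s | c k == w] is Some k then val k else 0.

Lemma idx_c m (N : bmat m m) s c : @is_cyc m N s c ->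
  forall k, k < s -> idx c s (c k) = k.
Proof.
move=> Hc k Hk; rewrite /idx; case: pickP => [k' /eqP E|H].
  exact: (cyc_inj Hc (ltn_ord k') Hk E).
by have := H (Ordinal Hk); rewrite eqxx.
Qed.

Definition Rs m (c : nat -> 'I_m) s := [set c (nat_of_ord i) | i : 'I_s].

Lemma card_R m (N : bmat m m) s c : @is_cyc m N s c -> #|Rs c s| = s.
Proof.
move=> Hc; have Hinj : injective (fun i : 'I_s => c i).
  by move=> i j /(cyc_inj Hc (ltn_ord i) (ltn_ord j)) /val_inj.
by rewrite card_imset // card_ord.
Qed.

Lemma in_R m (N : bmat m m) s c : @is_cyc m N s c -> forall i, c i \in Rs c s.
Proof.
move=> Hc i; rewrite (cyc_mod Hc); apply/imsetP.
by exists (Ordinal (ltn_pmod i (let: And4 h _ _ _ := Hc in h))).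
Qed.

Lemma R_inv m (N : bmat m m) s c : @is_cyc m N s c ->
  forall w, w \in Rs c s -> idx c s w < s /\ c (idx c s w) = w.
Proof.
by move=> Hc w /imsetP[i _ ->]; rewrite (idx_c Hc (ltn_ord i)).
Qed.

Lemma s_le_m m (N : bmat m m) s c : @is_cyc m N s c -> s <= m.
Proof.
by move=> Hc; rewrite -(card_R Hc); apply: leq_trans (max_card _) _; rewrite card_ord.
Qed.

Lemma girth_lt m (N : bmat m m) r s c : primr N r -> @is_cyc m N s c -> 1 < m -> s < m.
Proof.
move=> Hp Hc m1; rewrite ltn_neqAle (s_le_m Hc) andbT; apply/eqP=> Esm.
have RT : Rs c s = setT.
  by apply/eqP; rewrite eqEcard subsetT cardsT card_ord (card_R Hc) -Esm leqnn.
have Hall w : idx c s w < s /\ c (idx c s w) = w by apply: (R_inv Hc); rewrite RT inE.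
apply: (@no_potential m N r (c 0) s (idx c s) Hp); first by rewrite Esm.
move=> a b Hab; have [_ Ea] := Hall a; have [Hb Eb] := Hall b.
rewrite -Ea -Eb in Hab; have := cyc_arc Hc Hab.
by rewrite (modn_small Hb).
Qed.

Lemma walk_iter m (N : bmat m m) k y : bpow N k y y -> forall j, bpow N (j * k) y y.
Proof.
move=> H; elim=> [|j IH]; first by rewrite mul0n bpow0.
by rewrite mulSn; apply: walk_add H IH.
Qed.

Lemma other_out m (N : bmat m m) r s c z : primr N r -> @is_cyc m N s c ->
  z \notin Rs c s -> exists y, N z y && (y != z).
Proof.
move=> Hp Hc Hz; case: (boolP [exists y, N z y && (y != z)]) => [/existsP//|/existsPn H].
exfalso.
have W t y : bpow N t z y -> y = z.
  elim: t y => [|t IH] y; first by rewrite bpow0 => /eqP.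
  rewrite bpowS => /existsP[k /andP[/IH -> Hk]].
  by apply/eqP; have := H y; rewrite Hk /= negbK eq_sym.
case: (Hp) => Hr Hf; have := W r (c 0) (Hf _ _) => E.
by move: Hz; rewrite -E (in_R Hc).
Qed.

Lemma detour m (N : bmat m m) r s c z : primr N r -> @is_cyc m N s c -> 2 < s ->
  (forall w, w \notin Rs c s -> w = z) -> z \notin Rs c s ->
  exists i, N (c i) z && N z (c i.+1).
Proof.
move=> Hp Hc s2 Hother Hz.
have s0 : 0 < s by apply: leq_trans s2.
case: (boolP [exists i : 'I_s, N (c i) z && N z (c i.+1)]) => [/existsP[i Hi]|/existsPn H].
  by exists i.
exfalso.
have Hnd i : ~~ (N (c i) z && N z (c i.+1)).
  have := H (Ordinal (ltn_pmod i s0)); rewrite /= -(cyc_mod Hc).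
  have -> : c (i %% s).+1 = c i.+1.
    by rewrite (cyc_mod Hc (i %% s).+1) (cyc_mod Hc i.+1); congr c; rewrite -[(i %% s).+1]addn1 modnDml addn1.
  done.
have nzz : ~~ N z z.
  case: (Hc) => _ Hmin _ _; have := Hmin 1 z isT (leq_trans _ s2); rewrite bpow1; exact.
have Rw w : w != z -> w \in Rs c s.
  by move=> Hw; apply/negPn/negP=> /Hother E; rewrite E eqxx in Hw.
have two i j : N (c i) z -> N z (c j) -> j %% s = (i + 2) %% s.
  move=> H1 H2; have H12 : bpow N 2 (c i) (c j).
    by apply: (@walk_add _ _ 1 1 _ z); rewrite bpow1.
  have [k [k0 k2 Ek]] := @cyc_short _ _ _ _ Hc 2 i j isT H12.
  case: k k0 k2 Ek => [|[|[|k]]] // _ _ Ek.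
  have : N z (c i.+1) by rewrite (cyc_mod Hc (i.+1)) -(addn1 i) -Ek -(cyc_mod Hc).
  by move=> H3; have := Hnd i; rewrite H1 H3.
have [x Hx] := in_nb Hp z.
have xz : x != z by apply/eqP=> E; move: nzz; rewrite -{1}E Hx.
have [ix Eix] := R_inv Hc (Rw x xz).
have [y /andP[Hy yz]] := other_out Hp Hc Hz.
have [iy Eiy] := R_inv Hc (Rw y yz).
set i0 := idx c s x.
set phi := fun w => if w == z then i0.+1 else idx c s w.
apply: (@no_potential m N r z s phi Hp); first by apply: ltn_trans s2.
move=> a b Hab.
rewrite /phi; case: (eqVneq a z) => [Ea|az]; case: (eqVneq b z) => [Eb|bz].
- by move: nzz; rewrite -{1}Ea -{1}Eb Hab.
- rewrite Ea in Hab; have [ib Eib] := R_inv Hc (Rw b bz).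
  rewrite -Eib in Hab; rewrite -Eix in Hx.
  by rewrite (two _ _ Hx Hab) addn2.
- rewrite Eb in Hab; have [ia Eia] := R_inv Hc (Rw a az).
  rewrite -Eia in Hab; rewrite -Eix in Hx; rewrite -Eiy in Hy.
  have E1 := two _ _ Hx Hy; have E2 := two _ _ Hab Hy.
  move: E1; rewrite E2 => /eqP; rewrite eqn_modDr => /eqP E3.
  by rewrite -addn1 -modnDml -E3 modnDml addn1.
- have [ia Eia] := R_inv Hc (Rw a az); have [ib Eib] := R_inv Hc (Rw b bz).
  rewrite -Eia -Eib in Hab; have := cyc_arc Hc Hab.
  by rewrite (modn_small ib).
Qed.

Lemma mwalk m (N : bmat m m) s c z i0 : @is_cyc m N s c ->
  N (c i0) z -> N z (c i0.+1) -> forall i, bpow N s.+1 (c i) (c i).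
Proof.
move=> Hc H1 H2 i; have s0 : 0 < s by case: Hc.
have [l [Hl Hls Hli]] := cyc_back Hc i0 i.
have W1 : bpow N (l + 2) (c i) (c i0.+1).
  by apply: walk_add Hl _; apply: (@walk_add _ _ 1 1 _ z); rewrite bpow1.
have W2 := cyc_walk Hc i0.+1 (s - l.+1).
have E : c (i0.+1 + (s - l.+1)) = c i.
  rewrite (cyc_mod Hc i) (cyc_mod Hc (_ + _)) -Hli; congr c.
  have -> : i0.+1 + (s - l.+1) = i0 + (s - l) by lia.
  by rewrite -modnDml addnBA // ltnW.
have -> : s.+1 = (l + 2) + (s - l.+1) by lia.
by apply: walk_add W1 _; rewrite -E.
Qed.

Lemma K1 m (N : bmat m m) r s c a d L : primr N r -> @is_cyc m N s c ->
  d * s.+1 <= L -> bpow N (d * s.+1) (c (a + d)) (c (a + d)) ->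
  exists w, bpow N L (c a) w && bpow N L (c (a + d)) w.
Proof.
move=> Hp Hc HL Hyy; set y := c (a + d).
have [w Hw] := out_ex Hp (L - d * s.+1) y.
exists w; apply/andP; split; last by rewrite -(subnKC HL); apply: walk_add Hyy Hw.
have Hy1 : bpow N (d + d * s) (c a) y.
  by apply: walk_add (cyc_walk Hc a d) _; apply: walk_iter; apply: cyc_Z.
have -> : L = (d + d * s) + (L - d * s.+1) by rewrite -mulnS subnKC.
by apply: walk_add Hy1 Hw.
Qed.

Lemma special m (N : bmat m m) r s c p : primr N r -> @is_cyc m N s c ->
  m = p.*2 -> s = m.-1 -> 0 < p ->
  forall u v, exists w, bpow N (1 + p.-1 * m) u w && bpow N (1 + p.-1 * m) v w.
Proof.
move=> Hp Hc Em Es p0 u v.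
have s0 : 0 < s by case: Hc.
have [z Ez] : exists z, ~: Rs c s = [set z].
  apply/cards1P/eqP; have := cardsC (Rs c s); rewrite (card_R Hc) card_ord; lia.
have Hz : z \notin Rs c s by rewrite -in_setC Ez set11.
have Hother w : w \notin Rs c s -> w = z by rewrite -in_setC Ez => /set1P.
have outR w : exists2 k, k < s & N w (c k).
  case: (boolP (w \in Rs c s)) => Hw.
    have [iw Ew] := R_inv Hc Hw.
    exists ((idx c s w).+1 %% s); first by rewrite ltn_pmod.
    by rewrite -(cyc_mod Hc) -{1}Ew; case: Hc => _ _ ->.
  rewrite (Hother w Hw); have [y /andP[Hy yz]] := other_out Hp Hc Hz.
  have Ry : y \in Rs c s by apply/negPn/negP=> /Hother E; rewrite E eqxx in yz.
  have [iy Ey] := R_inv Hc Ry; exists (idx c s y) => //; by rewrite Ey.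
have Hcl d i : d <= p.-1 -> bpow N (d * s.+1) (c i) (c i).
  case: d => [|d] Hd; first by rewrite mul0n bpow0.
  have s2 : 2 < s by rewrite Es Em; lia.
  have Hoth' w : w \notin Rs c s -> w = z := Hother w.
  have [i0 /andP[H1 H2]] := detour Hp Hc s2 Hoth' Hz.
  by apply: walk_iter; apply: mwalk Hc H1 H2 i.
have [a Ha Hua] := outR u; have [b Hb Hvb] := outR v.
set L := p.-1 * m.
suff [w Hw] : exists w, bpow N L (c a) w && bpow N L (c b) w.
  case/andP: Hw => Hw1 Hw2; exists w; apply/andP; split.
    by apply: walk_add Hw1; rewrite bpow1.
  by apply: walk_add Hw2; rewrite bpow1.
have Hms : s.+1 = m by rewrite Es; lia.
have HL d : d <= p.-1 -> d * s.+1 <= L by move=> Hd; rewrite Hms leq_mul2r Hd orbT.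
wlog ab : a b Ha Hb {Hua Hvb} / a <= b => [W|].
  case: (leqP a b) => H; first exact: W.
  have [w Hw] := W b a Hb Ha (ltnW H); exists w; by rewrite andbC.
case: (leqP (b - a) p.-1) => Hd.
  have := K1 (a := a) Hp Hc (HL _ Hd) (Hcl _ _ Hd); rewrite subnKC //.
have Hd' : a + s - b <= p.-1 by lia.
have := K1 (a := b) Hp Hc (HL _ Hd') (Hcl _ _ Hd').
have -> : b + (a + s - b) = a + s by lia.
case: Hc => _ _ _ ->; case=> w Hw; exists w; by rewrite andbC.
Qed.

Lemma scr m (N : bmat m m) r : primr N r -> forall u v : 'I_m,
  exists w, bpow N (((m.-1) ^ 2 + 1 + 1) %/ 2) u w &&
            bpow N (((m.-1) ^ 2 + 1 + 1) %/ 2) v w.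
Proof.
move=> Hp u v; set T := _ %/ 2.
case: (eqVneq u v) => [<-|Huv].
  by have [w Hw] := out_ex Hp T u; exists w; rewrite Hw.
have m1 : 1 < m.
  have := ltn_ord u; have := ltn_ord v.
  have : (u : nat) != v by apply: contra Huv => /eqP H; apply/eqP; apply: ord_inj.
  lia.
have [s [c Hc]] := girth_cycle Hp u.
have sm := girth_lt Hp Hc m1.
have s0 : 0 < s by case: Hc.
have Yb := Y_bound Hp Hc.
have bnd d w y : bpow N d w y -> bpow N s y y -> d <= T ->
   minn m (1 + (T - d) %/ s) <= #|[set x | bpow N T w x]| := reach_bound Hp s0.
have meet : forall a b, a + b > m -> a <= #|[set x | bpow N T u x]| ->
    b <= #|[set x | bpow N T v x]| -> exists w, bpow N T u w && bpow N T v w.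
  move=> a b Hab Ha Hb; have : #|'I_m| < #|[set x | bpow N T u x]| + #|[set x | bpow N T v x]|.
    rewrite card_ord; lia.
  by move/cards_meet=> [w]; rewrite !inE => H; exists w.
have reach t w : minn m (s + t) = m -> exists2 y, bpow N t w y & bpow N s y y.
  move=> Et; have := Yb t; rewrite Et => Hc2.
  have : w \in [set u : 'I_m | [exists w in Zs N s, bpow N t u w]].
    suff -> : [set u : 'I_m | [exists w in Zs N s, bpow N t u w]] = setT by rewrite inE.
    by apply/eqP; rewrite eqEcard subsetT cardsT card_ord.
  by rewrite inE => /existsP[y /andP[]]; rewrite inE => H1 H2; exists y.
have [p [Ep|Ep]] : exists p, m = p.*2.+1 \/ m = p.*2.
  exists m./2; rewrite -{1 3}(odd_double_half m); case: (odd m); [left|right] => //.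
-
  have ET : T = p * p * 2 + 1.
    rewrite /T Ep /= -[_ + 1 + 1](_ : (p * p * 2 + 1) * 2 = _); first by rewrite mulnK.
    rewrite -muln2; nia.
  have big w : p.+1 <= #|[set x | bpow N T w x]|.
    have Et : minn m (s + (m - s)) = m by apply/minn_idPl; lia.
    have [y H1 H2] := reach (m - s) w Et.
    apply: leq_trans (bnd _ _ _ H1 H2 _); last by rewrite ET; nia.
    have : p <= (T - (m - s)) %/ s by rewrite leq_divRL // ET; nia.
    lia.
  by apply: (meet _ _ _ (big u) (big v)); lia.
-
  case: p Ep => [|q] Ep; first by rewrite Ep in m1.
  have ET : T = q * q * 2 + q * 2 + 1.
    rewrite /T Ep doubleS /= -[_ + 1 + 1](_ : (q * q * 2 + q * 2 + 1) * 2 + 1 = _).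
      by rewrite divnMDl // divn_small ?addn0.
    rewrite -muln2; nia.
  case: (eqVneq s m.-1) => Es.
    have E2 : 1 + q.+1.-1 * m = T by rewrite ET Ep; nia.
    by have := special Hp Hc Ep Es isT u v; rewrite E2.
  have sm2 : s <= m - 2 by move: sm Es; rewrite Ep; lia.
  set A := [set u : 'I_m | [exists w in Zs N s, bpow N (m - s - 1) u w]].
  have cA : m - 1 <= #|A|.
    have := Yb (m - s - 1); rewrite -/A; have -> : minn m (s + (m - s - 1)) = m - 1 by lia.
    done.
  have sizeAll w : q.+1 <= #|[set x | bpow N T w x]|.
    have Et : minn m (s + (m - s)) = m by apply/minn_idPl; lia.
    have [y H1 H2] := reach (m - s) w Et.
    apply: leq_trans (bnd _ _ _ H1 H2 _); last by rewrite ET; nia.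
    have : q <= (T - (m - s)) %/ s by rewrite leq_divRL // ET; nia.
    lia.
  have sizeA w : w \in A -> q.+2 <= #|[set x | bpow N T w x]|.
    rewrite inE => /existsP[y /andP[]]; rewrite inE => H2 H1.
    apply: leq_trans (bnd _ _ _ H1 H2 _); last by rewrite ET; nia.
    have : q.+1 <= (T - (m - s - 1)) %/ s by rewrite leq_divRL // ET; nia.
    lia.
  case: (boolP (u \in A)) => uA.
    by apply: (meet _ _ _ (sizeA u uA) (sizeAll v)); lia.
  case: (boolP (v \in A)) => vA.
    by apply: (meet _ _ _ (sizeAll u) (sizeA v vA)); lia.
  have : A \subset ~: [set u; v].
    apply/subsetP=> x Hx; rewrite !inE; apply/negP=> /orP[]/eqP E.
      by rewrite -E Hx in uA.
    by rewrite -E Hx in vA.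
  move/subset_leq_card; have := cardsC [set u; v]; rewrite cards2 Huv card_ord.
  lia.
Qed.

From Stdlib Require Import FunctionalExtensionality.

Lemma drop_fac n b (M : bmat n n) (A : bmat n b.+1) (B : bmat b.+1 n) q :
  M = bmul A B -> (forall i j, ~~ (A i q && B q j)) -> bfactors b M.
Proof.
move=> EM H.
exists [ffun i => fun k => A i (lift q k)], [ffun k => fun j => B (lift q k) j].
rewrite EM; apply/ffunP=> i; apply: functional_extensionality => j.
rewrite !bmulE; apply/existsP/existsP => [[k Hk]|[k]].
  case: (unliftP q k) Hk => [k' ->|->] Hk.
    by exists k'; rewrite !ffunE.
  by have := H i j; rewrite Hk.
by rewrite !ffunE => Hk; exists (lift q k).
Qed.

Lemma M_of_N n b (A : bmat n b) (B : bmat b n) t i p q j :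
  A i p -> bpow (bmul B A) t p q -> B q j -> bpow (bmul A B) t.+1 i j.
Proof.
elim: t q j => [|t IH] q j Hip.
  rewrite bpow0 => /eqP <- Hpj; rewrite bpow1 bmulE; apply/existsP; exists p.
  by rewrite Hip.
rewrite bpowS => /existsP[q' /andP[Hpq']]; rewrite bmulE => /existsP[l /andP[Hl Hlq]] Hqj.
rewrite bpowS; apply/existsP; exists l; rewrite (IH _ _ Hip Hpq' Hl) /=.
by rewrite bmulE; apply/existsP; exists q; rewrite Hlq.
Qed.

Lemma N_of_M n b (A : bmat n b) (B : bmat b n) t q j l q' :
  B q j -> bpow (bmul A B) t j l -> A l q' -> bpow (bmul B A) t.+1 q q'.
Proof.
elim: t q' l => [|t IH] q' l Hqj.
  rewrite bpow0 => /eqP <- Hl; rewrite bpow1 bmulE; apply/existsP; exists j.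
  by rewrite Hqj.
rewrite bpowS => /existsP[k /andP[Hjk]]; rewrite bmulE => /existsP[x /andP[Hkx Hxl]] Hlq.
rewrite bpowS; apply/existsP; exists x; rewrite (IH _ _ Hqj Hjk Hkx) /=.
by rewrite bmulE; apply/existsP; exists l; rewrite Hxl.
Qed.

Lemma no_cross n b (M : bmat n n) (A : bmat n b) (B : bmat b n) (q : 'I_b) i0 j0 :
  M = bmul A B -> M i0 j0 -> (forall b', 0 < b' -> b' < b -> ~ bfactors b' M) ->
  (forall i j, ~~ (A i q && B q j)) -> False.
Proof.
case: b A B q => [|b'] A B q; first by case: q.
move=> EM H0 Hmin Hq; have Hf := drop_fac EM Hq.
case: b' A B q EM Hmin Hq Hf => [|b'] A B q EM Hmin Hq Hf.
  move: H0; rewrite EM bmulE => /existsP[p]; have -> : p = q by rewrite !ord1.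
  by rewrite (negbTE (Hq _ _)).
by apply: (Hmin b'.+1).
Qed.

Theorem theorem2p3 (n : nat) (M : bmat n n) (b k : nat) :
  2 <= n -> primitive M -> nonzero M ->
  is_boolean_rank M b -> is_scrambling_index M k ->
  k <= ((b.-1 ^ 2 + 1) + 1) %/ 2 + 1.
Proof.
move=> n2 [r Hr] [i0 [j0 Hij0]] [b0 [[A [B EM]] Hmin]] [k0 [_ Hkmin]].
set K := _ %/ 2.
have HM i j : M i j = [exists p, A i p && B p j] by rewrite EM bmulE.
have r0 : 0 < r.
  case: r Hr => // Hr; have := Hr (Ordinal (ltnW n2)) (Ordinal n2).
  by rewrite bpow0.
have rowA i : exists p, A i p.
  have := Hr i i; rewrite -(subnKC r0) => /walk_split[w]; rewrite bpow1 HM.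
  by case/existsP=> p /andP[H _]; exists p.
have b1 q : (forall i j, ~~ (A i q && B q j)) -> False.
  exact: no_cross EM Hij0 Hmin.
have rowB q : exists j, B q j.
  case: (boolP [exists j, B q j]) => [/existsP//|/existsPn H].
  by exfalso; apply: (b1 q) => i j; rewrite (negbTE (H j)) andbF.
have colA q : exists i, A i q.
  case: (boolP [exists i, A i q]) => [/existsP//|/existsPn H].
  by exfalso; apply: (b1 q) => i j; rewrite (negbTE (H i)).
have HpN : primr (bmul B A) r.+1.
  split=> // q q'; have [j Hj] := rowB q; have [l Hl] := colA q'.
  by apply: (N_of_M Hj _ Hl); rewrite -EM; apply: Hr.
have Hscr : rows_scrambled (bpow M (K + 1)).
  move=> i i'; have [p Hp] := rowA i; have [p' Hp'] := rowA i'.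
  have [w /andP[H1 H2]] := scr HpN p p'.
  have [j Hj] := rowB w.
  exists j; rewrite addn1 EM; apply/andP; split; [exact: M_of_N Hp H1 Hj | exact: M_of_N Hp' H2 Hj].
have HK1 : 0 < K + 1 by rewrite addn1.
rewrite leqNgt; apply/negP=> HK; exact: (Hkmin _ HK1 HK Hscr).
Qed.
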